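(* Let $f=(f_1,f_2):\mathbb{R}^2\to\mathbb{R}^2$ be a smooth one-generic mapping having a cusp point at the origin with $f(\mathbf{0})=\mathbf{0}$, and suppose that $\frac{\partial f_1}{\partial x}(\mathbf{0})=\frac{\partial f_2}{\partial x}(\mathbf{0})=\frac{\partial f_2}{\partial y}(\mathbf{0})=0$, $\frac{\partial f_1}{\partial y}(\mathbf{0})\ne0$, $\frac{\partial J}{\partial x}(\mathbf{0})=0$, $\frac{\partial J}{\partial y}(\mathbf{0})\ne0$. Let $\varphi:(\mathbb{R},0)\to(\mathbb{R},0)$ be the smooth germ with $J(t,\varphi(t))\equiv0$, and set $$v_1=\frac{d^2}{dt^2}\begin{bmatrix}f_1(t,\varphi(t))\\ f_2(t,\varphi(t))\end{bmatrix}\Big|_{t=0},\qquad v_2=Df(\mathbf{0})\cdot\begin{bmatrix}\frac{\partial J}{\partial x}(\mathbf{0})\\ \frac{\partial J}{\partial y}(\mathbf{0})\end{bmatrix}.$$ Then (i) $\det DF(\mathbf{0})\ne0$; (ii) the (nonzero) vectors $v_1$ and $v_2$ point in the same direction if and only if $\det DF(\mathbf{0})<0$, and in opposite directions if and only if $\det DF(\mathbf{0})>0$.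
   Context: $J=\det Df$ and $F=Df\cdot(-\partial J/\partial y,\ \partial J/\partial x)^T$. $f$ is one-generic if $dJ\ne0$ on $J^{-1}(0)$ (equivalently, $j^1f$ is transverse to the corank strata). A point $p\in S_1(f)=J^{-1}(0)$ with $T_pS_1(f)=\ker Df(p)$ is a cusp point if it is a simple zero of $dJ(\xi)$ on $S_1(f)$, $\xi$ a nonvanishing vector field along $S_1(f)$ in $\ker Df$. *)

(* Defs.v *)
From Stdlib Require Import Reals.
From Coquelicot Require Import Coquelicot.
Open Scope R_scope.

Definition dx (g : R -> R -> R) : R -> R -> R :=
  fun x y => Derive (fun t => g t y) x.
Definition dy (g : R -> R -> R) : R -> R -> R :=
  fun x y => Derive (fun t => g x t) y.

Fixpoint Ck (k : nat) (g : R -> R -> R) : Prop :=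
  (forall x y, continuous (fun p : R * R => g (fst p) (snd p)) (x, y)) /\
  match k with
  | O => True
  | S k' => (forall x y, ex_derive (fun t => g t y) x) /\
            (forall x y, ex_derive (fun t => g x t) y) /\
            Ck k' (dx g) /\ Ck k' (dy g)
  end.

Definition smooth2 (g : R -> R -> R) : Prop := forall k, Ck k g.

Definition smooth_on1 (g : R -> R) (eps : R) : Prop :=
  forall (n : nat) (t : R), Rabs t < eps -> ex_derive_n g n t.

Definition Jac (f1 f2 : R -> R -> R) : R -> R -> R :=
  fun x y => dx f1 x y * dy f2 x y - dy f1 x y * dx f2 x y.

Definition Dfapp (f1 f2 : R -> R -> R) (x y v1 v2 : R) : R * R :=
  (dx f1 x y * v1 + dy f1 x y * v2, dx f2 x y * v1 + dy f2 x y * v2).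

Definition Fmap1 (f1 f2 : R -> R -> R) : R -> R -> R :=
  fun x y => fst (Dfapp f1 f2 x y (- dy (Jac f1 f2) x y) (dx (Jac f1 f2) x y)).
Definition Fmap2 (f1 f2 : R -> R -> R) : R -> R -> R :=
  fun x y => snd (Dfapp f1 f2 x y (- dy (Jac f1 f2) x y) (dx (Jac f1 f2) x y)).

Definition detDF (f1 f2 : R -> R -> R) (x y : R) : R :=
  dx (Fmap1 f1 f2) x y * dy (Fmap2 f1 f2) x y
  - dy (Fmap1 f1 f2) x y * dx (Fmap2 f1 f2) x y.

Definition one_generic (f1 f2 : R -> R -> R) : Prop :=
  forall x y, Jac f1 f2 x y = 0 ->
    (dx (Jac f1 f2) x y, dy (Jac f1 f2) x y) <> (0, 0).

(* p = (p1,p2) is a cusp point: p in S_1(f) = J^{-1}(0); there is a smooth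
   regular curve gamma = (g1,g2) in S_1(f) through p (a local parametrization of
   S_1(f) near p), with T_p S_1(f) = span gamma'(0) = ker Df(p), and a smooth
   nonvanishing vector field xi = (k1,k2) along gamma lying in ker Df, such that
   t |-> dJ_{gamma(t)}(xi(t)) has a simple zero at t = 0. *)
Definition cusp_point (f1 f2 : R -> R -> R) (p1 p2 : R) : Prop :=
  Jac f1 f2 p1 p2 = 0 /\
  exists (eps : R) (g1 g2 k1 k2 : R -> R),
    0 < eps /\
    smooth_on1 g1 eps /\ smooth_on1 g2 eps /\
    smooth_on1 k1 eps /\ smooth_on1 k2 eps /\
    g1 0 = p1 /\ g2 0 = p2 /\
    (forall t, Rabs t < eps ->
        Jac f1 f2 (g1 t) (g2 t) = 0 /\
        (Derive g1 t, Derive g2 t) <> (0, 0) /\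
        (k1 t, k2 t) <> (0, 0) /\
        Dfapp f1 f2 (g1 t) (g2 t) (k1 t) (k2 t) = (0, 0)) /\
    (forall v1 v2, Dfapp f1 f2 p1 p2 v1 v2 = (0, 0) <->
        exists c, v1 = c * Derive g1 0 /\ v2 = c * Derive g2 0) /\
    (let h := fun t => dx (Jac f1 f2) (g1 t) (g2 t) * k1 t
                       + dy (Jac f1 f2) (g1 t) (g2 t) * k2 t in
     h 0 = 0 /\ Derive h 0 <> 0).

(* Main.v *)
Require Import Defs.
From Stdlib Require Import Reals Lra Psatz FunctionalExtensionality.
From Coquelicot Require Import Coquelicot.
Open Scope R_scope.

Lemma Ck_cont k g : Ck k g -> forall x y, continuous (fun p : R * R => g (fst p) (snd p)) (x, y).
Proof. destruct k; simpl; tauto. Qed.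
Lemma Ck_exdx k g : Ck (S k) g -> forall x y, ex_derive (fun t => g t y) x.
Proof. simpl; tauto. Qed.
Lemma Ck_exdy k g : Ck (S k) g -> forall x y, ex_derive (fun t => g x t) y.
Proof. simpl; tauto. Qed.
Lemma Ck_dx k g : Ck (S k) g -> Ck k (dx g).
Proof. simpl; tauto. Qed.
Lemma Ck_dy k g : Ck (S k) g -> Ck k (dy g).
Proof. simpl; tauto. Qed.
Lemma Ck_S k : forall g, Ck (S k) g -> Ck k g.
Proof.
  induction k; intros g H.
  - simpl in *; tauto.
  - destruct H as [H1 [H2 [H3 [H4 H5]]]]. split; [exact H1|].
    split; [exact H2|]. split; [exact H3|]. split; apply IHk; assumption.
Qed.
Lemma Ck_le k m g : (m <= k)%nat -> Ck k g -> Ck m g.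
Proof. induction 1; auto. intros H0; apply IHle, Ck_S, H0. Qed.

Lemma dx_plus g h x y : ex_derive (fun t => g t y) x -> ex_derive (fun t => h t y) x ->
  dx (fun u v => g u v + h u v) x y = dx g x y + dx h x y.
Proof. intros; unfold dx; apply (Derive_plus (fun t => g t y) (fun t => h t y)); auto. Qed.
Lemma dy_plus g h x y : ex_derive (fun t => g x t) y -> ex_derive (fun t => h x t) y ->
  dy (fun u v => g u v + h u v) x y = dy g x y + dy h x y.
Proof. intros; unfold dy; apply (Derive_plus (fun t => g x t) (fun t => h x t)); auto. Qed.
Lemma dx_mult g h x y : ex_derive (fun t => g t y) x -> ex_derive (fun t => h t y) x ->
  dx (fun u v => g u v * h u v) x y = dx g x y * h x y + g x y * dx h x y.
Proof. intros; unfold dx; apply (Derive_mult (fun t => g t y) (fun t => h t y)); auto. Qed.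
Lemma dy_mult g h x y : ex_derive (fun t => g x t) y -> ex_derive (fun t => h x t) y ->
  dy (fun u v => g u v * h u v) x y = dy g x y * h x y + g x y * dy h x y.
Proof. intros; unfold dy; apply (Derive_mult (fun t => g x t) (fun t => h x t)); auto. Qed.
Lemma dx_opp g x y : dx (fun u v => - g u v) x y = - dx g x y.
Proof. unfold dx; apply (Derive_opp (fun t => g t y)). Qed.
Lemma dy_opp g x y : dy (fun u v => - g u v) x y = - dy g x y.
Proof. unfold dy; apply (Derive_opp (fun t => g x t)). Qed.

Lemma Ck_plus k : forall g h, Ck k g -> Ck k h -> Ck k (fun u v => g u v + h u v).
Proof.
  induction k; intros g h Hg Hh.
  - split; [|exact I]. intros x y.
    apply (continuous_plus (fun p : R*R => g (fst p) (snd p)) (fun p : R*R => h (fst p) (snd p)));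
      eapply Ck_cont; eauto.
  - split.
    { intros x y.
      apply (continuous_plus (fun p : R*R => g (fst p) (snd p)) (fun p : R*R => h (fst p) (snd p)));
        eapply Ck_cont; eauto. }
    split. { intros x y. apply (ex_derive_plus (fun t => g t y) (fun t => h t y)); eapply Ck_exdx; eauto. }
    split. { intros x y. apply (ex_derive_plus (fun t => g x t) (fun t => h x t)); eapply Ck_exdy; eauto. }
    split.
    + replace (dx (fun u v => g u v + h u v)) with (fun u v => dx g u v + dx h u v).
      * apply IHk; eapply Ck_dx; eauto.
      * apply functional_extensionality; intro x; apply functional_extensionality; intro y.
        symmetry; apply dx_plus; eapply Ck_exdx; eauto.
    + replace (dy (fun u v => g u v + h u v)) with (fun u v => dy g u v + dy h u v).
      * apply IHk; eapply Ck_dy; eauto.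
      * apply functional_extensionality; intro x; apply functional_extensionality; intro y.
        symmetry; apply dy_plus; eapply Ck_exdy; eauto.
Qed.

Lemma Ck_opp k : forall g, Ck k g -> Ck k (fun u v => - g u v).
Proof.
  induction k; intros g Hg.
  - split; [|exact I]. intros x y.
    apply (continuous_opp (fun p : R*R => g (fst p) (snd p))); eapply Ck_cont; eauto.
  - split.
    { intros x y. apply (continuous_opp (fun p : R*R => g (fst p) (snd p))); eapply Ck_cont; eauto. }
    split. { intros x y. apply (ex_derive_opp (fun t => g t y)); eapply Ck_exdx; eauto. }
    split. { intros x y. apply (ex_derive_opp (fun t => g x t)); eapply Ck_exdy; eauto. }
    split.
    + replace (dx (fun u v => - g u v)) with (fun u v => - dx g u v).
      * apply IHk; eapply Ck_dx; eauto.
      * apply functional_extensionality; intro x; apply functional_extensionality; intro y.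
        symmetry; apply dx_opp.
    + replace (dy (fun u v => - g u v)) with (fun u v => - dy g u v).
      * apply IHk; eapply Ck_dy; eauto.
      * apply functional_extensionality; intro x; apply functional_extensionality; intro y.
        symmetry; apply dy_opp.
Qed.

Lemma Ck_mult k : forall g h, Ck k g -> Ck k h -> Ck k (fun u v => g u v * h u v).
Proof.
  induction k; intros g h Hg Hh.
  - split; [|exact I]. intros x y.
    apply (continuous_mult (fun p : R*R => g (fst p) (snd p)) (fun p : R*R => h (fst p) (snd p)));
      eapply Ck_cont; eauto.
  - split.
    { intros x y.
      apply (continuous_mult (fun p : R*R => g (fst p) (snd p)) (fun p : R*R => h (fst p) (snd p)));
        eapply Ck_cont; eauto. }
    split. { intros x y. apply (ex_derive_mult (fun t => g t y) (fun t => h t y)); eapply Ck_exdx; eauto. }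
    split. { intros x y. apply (ex_derive_mult (fun t => g x t) (fun t => h x t)); eapply Ck_exdy; eauto. }
    split.
    + replace (dx (fun u v => g u v * h u v)) with (fun u v => dx g u v * h u v + g u v * dx h u v).
      * apply Ck_plus; apply IHk; first [eapply Ck_dx; eauto | apply Ck_S; auto].
      * apply functional_extensionality; intro x; apply functional_extensionality; intro y.
        symmetry; apply dx_mult; eapply Ck_exdx; eauto.
    + replace (dy (fun u v => g u v * h u v)) with (fun u v => dy g u v * h u v + g u v * dy h u v).
      * apply Ck_plus; apply IHk; first [eapply Ck_dy; eauto | apply Ck_S; auto].
      * apply functional_extensionality; intro x; apply functional_extensionality; intro y.
        symmetry; apply dy_mult; eapply Ck_exdy; eauto.
Qed.

Lemma Ck_minus k g h : Ck k g -> Ck k h -> Ck k (fun u v => g u v - h u v).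
Proof. intros; unfold Rminus; apply (Ck_plus k g (fun u v => - h u v)); auto; apply Ck_opp; auto. Qed.

Lemma Ck_ex_diff k : forall g, Ck k g -> forall x y, ex_diff_n g k x y.
Proof.
  induction k; intros g H x y.
  - split; [|exact I]. apply continuity_2d_pt_filterlim. apply (Ck_cont 0 g H).
  - split. { apply continuity_2d_pt_filterlim. apply (Ck_cont _ g H). }
    split. { eapply Ck_exdx; eauto. }
    split. { eapply Ck_exdy; eauto. }
    split. { apply (IHk (dx g)). eapply Ck_dx; eauto. }
    apply (IHk (dy g)). eapply Ck_dy; eauto.
Qed.

Lemma DL_pol1 f x y a b : DL_pol 1 f x y a b = f x y + dx f x y * a + dy f x y * b.
Proof.
  unfold DL_pol, differential, partial_derive, dx, dy; simpl. unfold Binomial.C; simpl. field.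
Qed.

Lemma Ck2_diff g : Ck 2 g -> forall x y, differentiable_pt_lim g x y (dx g x y) (dy g x y).
Proof.
  intros Hg x y.
  assert (Hl : locally_2d (fun u v => ex_diff_n g 2 u v) x y).
  { exists (mkposreal 1 Rlt_0_1). intros; apply Ck_ex_diff; auto. }
  destruct (Taylor_Lagrange_2d g 1 x y Hl) as [D [d Hd]].
  intros e.
  assert (He : 0 < e / (Rabs D + 1)).
  { apply Rdiv_lt_0_compat; [apply cond_pos|]. pose proof (Rabs_pos D); lra. }
  exists (mkposreal _ (Rmin_pos _ _ (cond_pos d) He)). simpl. intros u v Hu Hv.
  assert (Hu1 : Rabs (u - x) < d) by (eapply Rlt_le_trans; [apply Hu|apply Rmin_l]).
  assert (Hv1 : Rabs (v - y) < d) by (eapply Rlt_le_trans; [apply Hv|apply Rmin_l]).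
  assert (Hu2 : Rabs (u - x) < e / (Rabs D + 1)) by (eapply Rlt_le_trans; [apply Hu|apply Rmin_r]).
  assert (Hv2 : Rabs (v - y) < e / (Rabs D + 1)) by (eapply Rlt_le_trans; [apply Hv|apply Rmin_r]).
  specialize (Hd u v Hu1 Hv1). rewrite DL_pol1 in Hd.
  set (M := Rmax (Rabs (u - x)) (Rabs (v - y))) in *.
  assert (HM0 : 0 <= M) by (unfold M; eapply Rle_trans; [apply Rabs_pos|apply Rmax_l]).
  assert (HM : M < e / (Rabs D + 1)) by (unfold M; apply Rmax_lub_lt; auto).
  assert (HDM : (Rabs D + 1) * M <= e).
  { apply Rmult_lt_compat_l with (r := Rabs D + 1) in HM; [|pose proof (Rabs_pos D); lra].
    field_simplify in HM; [lra|pose proof (Rabs_pos D); lra]. }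
  replace (g u v - g x y - (dx g x y * (u - x) + dy g x y * (v - y)))
    with (g u v - (g x y + dx g x y * (u - x) + dy g x y * (v - y))) by ring.
  eapply Rle_trans; [apply Hd|].
  simpl. rewrite Rmult_1_r.
  assert (D <= Rabs D) by apply Rle_abs.
  assert (D * (M * M) <= (Rabs D + 1) * M * M).
  { apply Rle_trans with ((Rabs D + 1) * (M * M)); [apply Rmult_le_compat_r; [apply Rmult_le_pos; auto|lra]| lra]. }
  assert ((Rabs D + 1) * M * M <= e * M) by (apply Rmult_le_compat_r; auto).
  lra.
Qed.

Lemma chain g u v t du dv : Ck 2 g -> is_derive u t du -> is_derive v t dv ->
  is_derive (fun s => g (u s) (v s)) t (dx g (u t) (v t) * du + dy g (u t) (v t) * dv).
Proof.
  intros Hg Hu Hv. apply is_derive_Reals. apply is_derive_Reals in Hu. apply is_derive_Reals in Hv.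
  apply derivable_pt_lim_comp_2d; auto. apply Ck2_diff; auto.
Qed.

Lemma isd_mult f g x df dg : is_derive f x df -> is_derive g x dg ->
  is_derive (fun t => f t * g t) x (df * g x + f x * dg).
Proof. intros. apply (is_derive_mult f g); auto. intros; apply Rmult_comm. Qed.
Lemma isd_plus f g x df dg : is_derive f x df -> is_derive g x dg ->
  is_derive (fun t => f t + g t) x (df + dg).
Proof. intros. apply (is_derive_plus f g); auto. Qed.
Lemma isd_minus f g x df dg : is_derive f x df -> is_derive g x dg ->
  is_derive (fun t => f t - g t) x (df - dg).
Proof. intros. apply (is_derive_minus f g); auto. Qed.
Lemma isd_opp f x df : is_derive f x df -> is_derive (fun t => - f t) x (- df).
Proof. intros. apply (is_derive_opp f); auto. Qed.
Lemma isd_id x : is_derive (fun t : R => t) x 1.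
Proof. apply (is_derive_id x). Qed.
Lemma isd_const (c x : R) : is_derive (fun _ => c) x 0.
Proof. apply (is_derive_const c x). Qed.

Lemma isd_px k g x y : Ck (S k) g -> is_derive (fun t => g t y) x (dx g x y).
Proof. intros H. apply Derive_correct. eapply Ck_exdx; eauto. Qed.
Lemma isd_py k g x y : Ck (S k) g -> is_derive (fun t => g x t) y (dy g x y).
Proof. intros H. apply Derive_correct. eapply Ck_exdy; eauto. Qed.

Lemma loc_abs (x e : R) : Rabs x < e -> locally x (fun s : R => Rabs s < e).
Proof.
  intros H. assert (Hp : 0 < e - Rabs x) by lra.
  exists (mkposreal _ Hp). intros y0 Hy. simpl in Hy. set (y := (y0 : R)) in *.
  change (Rabs (y - x) < e - Rabs x) in Hy.
  pose proof (Rabs_triang (y - x) x) as T. replace ((y:R) - x + x) with (y:R) in T by ring. lra.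
Qed.

Lemma isd_zero_loc F x e : Rabs x < e -> (forall t, Rabs t < e -> F t = 0) -> is_derive F x 0.
Proof.
  intros Hx HF. apply (is_derive_ext_loc (fun _ => 0)).
  - eapply filter_imp; [|apply (loc_abs x e Hx)]. intros t Ht; simpl; rewrite HF; auto.
  - apply isd_const.
Qed.

Lemma so1_d g e t : smooth_on1 g e -> Rabs t < e -> is_derive g t (Derive g t).
Proof. intros H Ht. apply Derive_correct. apply (H 1%nat t Ht). Qed.
Lemma so1_dd g e t : smooth_on1 g e -> Rabs t < e -> is_derive (Derive g) t (Derive (Derive g) t).
Proof. intros H Ht. apply Derive_correct. apply (H 2%nat t Ht). Qed.

Lemma isd_eq (f : R -> R) (x l l' : R) : is_derive f x l -> l = l' -> is_derive f x l'.
Proof. intros H E; subst; auto. Qed.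

Lemma alg (a b p Cxx Cy Jxx phi2 g k k2' F1x F2x F2y F1y det v11 v12 v21 v22 : R) :
  a <> 0 -> b <> 0 -> Cxx = 0 -> b = -(a*Cy) -> F1x = -(p*b) + a*Jxx -> F2x = -(b*Cxx) ->
  F2y = -(b*Cy) -> p*g*k + a*k2' = 0 -> Jxx*g*k + b*k2' <> 0 -> Jxx + b*phi2 = 0 ->
  v11 = p + a*phi2 -> v12 = Cxx -> det = F1x * F2y - F1y * F2x -> v21 = a*b -> v22 = 0 ->
  det <> 0 /\ (v11, v12) <> (0,0) /\ (v21, v22) <> (0,0) /\
  ((exists c, 0 < c /\ v11 = c * v21 /\ v12 = c * v22) <-> det < 0) /\
  ((exists c, c < 0 /\ v11 = c * v21 /\ v12 = c * v22) <-> det > 0).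
Proof.
  intros Ha Hb HC HCy HF1 HF2 HF2y K1 Hh EP Hv1 Hv2 Hdet H21 H22. subst v21 v22.
  set (K := a*Jxx - b*p).
  assert (KNZ : K <> 0).
  { intro HK. apply Hh. apply (Rmult_eq_reg_l a); auto.
    replace (a * (Jxx*g*k + b*k2')) with (g*k*K + b*(p*g*k + a*k2')) by (unfold K; ring).
    rewrite HK, K1. ring. }
  assert (Cyv : Cy = - b / a) by (rewrite HCy; field; auto).
  assert (phv : phi2 = - Jxx / b) by (field_simplify_eq; [lra|auto]).
  assert (Hd : det = K * b^2 / a).
  { rewrite Hdet, HF2, HC, HF2y, HF1, Cyv. unfold K. field. auto. }
  assert (Hv : v11 = - K / b).
  { rewrite Hv1, phv. unfold K. field. auto. }
  assert (Hb2 : 0 < b^2) by (simpl; rewrite Rmult_1_r; assert (b*b > 0) by (apply Rsqr_pos_lt; auto); lra).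
  assert (Hb4 : 0 < b^4) by (replace (b^4) with (b^2*b^2) by ring; apply Rmult_lt_0_compat; auto).
  assert (Hc : v11 = (- det / b^4) * (a*b)) by (rewrite Hv, Hd; field; auto).
  repeat split.
  - rewrite Hd. unfold Rdiv. apply Rmult_integral_contrapositive; split; [|apply Rinv_neq_0_compat; auto].
    apply Rmult_integral_contrapositive; split; auto; lra.
  - intro E; injection E as E1 E2. rewrite Hv in E1. apply KNZ.
    apply (Rmult_eq_reg_r (/b)); [|apply Rinv_neq_0_compat; auto]. unfold Rdiv in E1. lra.
  - intro E; injection E as E1. apply Rmult_integral in E1; tauto.
  - intros [c [Hc0 [Hc1 _]]].
    assert (det = - c * b^4).
    { assert (c = - det / b^4).
      { apply (Rmult_eq_reg_r (a*b)). rewrite <- Hc1, <- Hc. auto.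
        apply Rmult_integral_contrapositive; auto. }
      rewrite H. field. lra. }
    nra.
  - intros Hneg. exists (- det / b^4). split; [|split; [auto|rewrite Hv2, HC; ring]].
    unfold Rdiv. apply Rmult_lt_0_compat; [lra|apply Rinv_0_lt_compat; auto].
  - intros [c [Hc0 [Hc1 _]]].
    assert (det = - c * b^4).
    { assert (c = - det / b^4).
      { apply (Rmult_eq_reg_r (a*b)). rewrite <- Hc1, <- Hc. auto.
        apply Rmult_integral_contrapositive; auto. }
      rewrite H. field. lra. }
    nra.
  - intros Hpos. exists (- det / b^4). split; [|split; [auto|rewrite Hv2, HC; ring]].
    unfold Rdiv. assert (0 < / b^4) by (apply Rinv_0_lt_compat; auto). nra.
Qed.

Theorem mainTheorem14 (f1 f2 : R -> R -> R) (phi : R -> R) (eps : R) :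
  smooth2 f1 -> smooth2 f2 ->
  one_generic f1 f2 ->
  cusp_point f1 f2 0 0 ->
  f1 0 0 = 0 -> f2 0 0 = 0 ->
  dx f1 0 0 = 0 -> dx f2 0 0 = 0 -> dy f2 0 0 = 0 -> dy f1 0 0 <> 0 ->
  dx (Jac f1 f2) 0 0 = 0 -> dy (Jac f1 f2) 0 0 <> 0 ->
  0 < eps -> smooth_on1 phi eps -> phi 0 = 0 ->
  (forall t, Rabs t < eps -> Jac f1 f2 t (phi t) = 0) ->
  let v1 := (Derive_n (fun t => f1 t (phi t)) 2 0,
             Derive_n (fun t => f2 t (phi t)) 2 0) in
  let v2 := Dfapp f1 f2 0 0 (dx (Jac f1 f2) 0 0) (dy (Jac f1 f2) 0 0) in
  detDF f1 f2 0 0 <> 0 /\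
  v1 <> (0, 0) /\ v2 <> (0, 0) /\
  ((exists c, 0 < c /\ fst v1 = c * fst v2 /\ snd v1 = c * snd v2)
     <-> detDF f1 f2 0 0 < 0) /\
  ((exists c, c < 0 /\ fst v1 = c * fst v2 /\ snd v1 = c * snd v2)
     <-> detDF f1 f2 0 0 > 0).
Proof.
  intros Hs1 Hs2 _ Hcusp H10 H20 HA0 HC0 HD0 Ha HJx0 Hb Heps Hphi Hphi0 HJphi.
  cbv zeta.
  assert (F1 : Ck 4 f1) by apply Hs1.
  assert (F2 : Ck 4 f2) by apply Hs2.
  assert (RA : Ck 3 (dx f1)) by (apply Ck_dx; auto).
  assert (RB : Ck 3 (dy f1)) by (apply Ck_dy; auto).
  assert (RC : Ck 3 (dx f2)) by (apply Ck_dx; auto).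
  assert (RD : Ck 3 (dy f2)) by (apply Ck_dy; auto).
  assert (RJ : Ck 3 (Jac f1 f2)).
  { unfold Jac. apply (Ck_minus 3 (fun x y => dx f1 x y * dy f2 x y) (fun x y => dy f1 x y * dx f2 x y));
    apply (Ck_mult 3); auto. }
  assert (RJx : Ck 2 (dx (Jac f1 f2))) by (apply Ck_dx; auto).
  assert (RJy : Ck 2 (dy (Jac f1 f2))) by (apply Ck_dy; auto).
  assert (RA2 : Ck 2 (dx f1)) by (apply Ck_S; auto).
  assert (RB2 : Ck 2 (dy f1)) by (apply Ck_S; auto).
  assert (RC2 : Ck 2 (dx f2)) by (apply Ck_S; auto).
  assert (RD2 : Ck 2 (dy f2)) by (apply Ck_S; auto).
  assert (EJx : dx (Jac f1 f2) 0 0 = dx (dx f1) 0 0 * dy f2 0 0 + dx f1 0 0 * dx (dy f2) 0 0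
      - (dx (dy f1) 0 0 * dx f2 0 0 + dy f1 0 0 * dx (dx f2) 0 0)).
  { change (Derive (fun t => dx f1 t 0 * dy f2 t 0 - dy f1 t 0 * dx f2 t 0) 0 =
      dx (dx f1) 0 0 * dy f2 0 0 + dx f1 0 0 * dx (dy f2) 0 0
      - (dx (dy f1) 0 0 * dx f2 0 0 + dy f1 0 0 * dx (dx f2) 0 0)).
    apply is_derive_unique. eapply isd_eq; [apply isd_minus; apply isd_mult; eapply isd_px; eauto | reflexivity]. }
  assert (EJy : dy (Jac f1 f2) 0 0 = dy (dx f1) 0 0 * dy f2 0 0 + dx f1 0 0 * dy (dy f2) 0 0
      - (dy (dy f1) 0 0 * dx f2 0 0 + dy f1 0 0 * dy (dx f2) 0 0)).
  { change (Derive (fun t => dx f1 0 t * dy f2 0 t - dy f1 0 t * dx f2 0 t) 0 =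
      dy (dx f1) 0 0 * dy f2 0 0 + dx f1 0 0 * dy (dy f2) 0 0
      - (dy (dy f1) 0 0 * dx f2 0 0 + dy f1 0 0 * dy (dx f2) 0 0)).
    apply is_derive_unique. eapply isd_eq; [apply isd_minus; apply isd_mult; eapply isd_py; eauto | reflexivity]. }
  assert (EF1x : dx (Fmap1 f1 f2) 0 0 =
     dx (dx f1) 0 0 * - dy (Jac f1 f2) 0 0 + dx f1 0 0 * - dx (dy (Jac f1 f2)) 0 0
     + (dx (dy f1) 0 0 * dx (Jac f1 f2) 0 0 + dy f1 0 0 * dx (dx (Jac f1 f2)) 0 0)).
  { change (Derive (fun t => dx f1 t 0 * - dy (Jac f1 f2) t 0 + dy f1 t 0 * dx (Jac f1 f2) t 0) 0 =
     dx (dx f1) 0 0 * - dy (Jac f1 f2) 0 0 + dx f1 0 0 * - dx (dy (Jac f1 f2)) 0 0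
     + (dx (dy f1) 0 0 * dx (Jac f1 f2) 0 0 + dy f1 0 0 * dx (dx (Jac f1 f2)) 0 0)).
    apply is_derive_unique. eapply isd_eq; [apply isd_plus; apply isd_mult; [eapply isd_px; eauto | apply isd_opp; eapply isd_px; eauto | eapply isd_px; eauto | eapply isd_px; eauto] | reflexivity]. }
  assert (EF2x : dx (Fmap2 f1 f2) 0 0 =
     dx (dx f2) 0 0 * - dy (Jac f1 f2) 0 0 + dx f2 0 0 * - dx (dy (Jac f1 f2)) 0 0
     + (dx (dy f2) 0 0 * dx (Jac f1 f2) 0 0 + dy f2 0 0 * dx (dx (Jac f1 f2)) 0 0)).
  { change (Derive (fun t => dx f2 t 0 * - dy (Jac f1 f2) t 0 + dy f2 t 0 * dx (Jac f1 f2) t 0) 0 =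
     dx (dx f2) 0 0 * - dy (Jac f1 f2) 0 0 + dx f2 0 0 * - dx (dy (Jac f1 f2)) 0 0
     + (dx (dy f2) 0 0 * dx (Jac f1 f2) 0 0 + dy f2 0 0 * dx (dx (Jac f1 f2)) 0 0)).
    apply is_derive_unique. eapply isd_eq; [apply isd_plus; apply isd_mult; [eapply isd_px; eauto | apply isd_opp; eapply isd_px; eauto | eapply isd_px; eauto | eapply isd_px; eauto] | reflexivity]. }
  assert (EF2y : dy (Fmap2 f1 f2) 0 0 =
     dy (dx f2) 0 0 * - dy (Jac f1 f2) 0 0 + dx f2 0 0 * - dy (dy (Jac f1 f2)) 0 0
     + (dy (dy f2) 0 0 * dx (Jac f1 f2) 0 0 + dy f2 0 0 * dy (dx (Jac f1 f2)) 0 0)).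
  { change (Derive (fun t => dx f2 0 t * - dy (Jac f1 f2) 0 t + dy f2 0 t * dx (Jac f1 f2) 0 t) 0 =
     dy (dx f2) 0 0 * - dy (Jac f1 f2) 0 0 + dx f2 0 0 * - dy (dy (Jac f1 f2)) 0 0
     + (dy (dy f2) 0 0 * dx (Jac f1 f2) 0 0 + dy f2 0 0 * dy (dx (Jac f1 f2)) 0 0)).
    apply is_derive_unique. eapply isd_eq; [apply isd_plus; apply isd_mult; [eapply isd_py; eauto | apply isd_opp; eapply isd_py; eauto | eapply isd_py; eauto | eapply isd_py; eauto] | reflexivity]. }
  destruct Hcusp as [_ [e [g1 [g2 [k1 [k2 [He [Sg1 [Sg2 [Sk1 [Sk2 [Hg10 [Hg20 [Hcurve [Hker Hh]]]]]]]]]]]]]]].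
  cbv zeta in Hh. destruct Hh as [_ Hh].
  assert (He0 : Rabs 0 < e) by (rewrite Rabs_R0; auto).
  assert (Hg2d : Derive g2 0 = 0).
  { destruct (proj1 (Hker 1 0)) as [c [Hc1 Hc2]].
    - unfold Dfapp. rewrite HA0, HC0, HD0. f_equal; ring.
    - assert (c <> 0) by (intro; subst; lra).
      apply (Rmult_eq_reg_l c); auto. lra. }
  assert (Hk20 : k2 0 = 0).
  { destruct (Hcurve 0 He0) as [_ [_ [_ Hd]]]. rewrite Hg10, Hg20 in Hd.
    unfold Dfapp in Hd. injection Hd as Hd1 Hd2. rewrite HA0 in Hd1.
    apply (Rmult_eq_reg_l (dy f1 0 0)); auto. lra. }
  assert (EQ : (dx (dx f1) 0 0 * Derive g1 0 + dy (dx f1) 0 0 * Derive g2 0) * k1 0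
       + dx f1 0 0 * Derive k1 0
       + ((dx (dy f1) 0 0 * Derive g1 0 + dy (dy f1) 0 0 * Derive g2 0) * k2 0
       + dy f1 0 0 * Derive k2 0) = 0).
  { assert (H2 : is_derive (fun t => dx f1 (g1 t) (g2 t) * k1 t + dy f1 (g1 t) (g2 t) * k2 t) 0 0).
    { apply (isd_zero_loc _ 0 e); auto. intros t Ht.
      destruct (Hcurve t Ht) as [_ [_ [_ Hd]]]. unfold Dfapp in Hd. injection Hd as Hd1 Hd2. exact Hd1. }
    transitivity (Derive (fun t => dx f1 (g1 t) (g2 t) * k1 t + dy f1 (g1 t) (g2 t) * k2 t) 0);
      [|apply is_derive_unique; exact H2]. symmetry. apply is_derive_unique.
    - eapply isd_eq.
      + apply isd_plus; apply isd_mult;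
          [apply chain; auto; apply (so1_d _ e); auto | apply (so1_d _ e); auto
          |apply chain; auto; apply (so1_d _ e); auto | apply (so1_d _ e); auto].
      + cbv beta. rewrite Hg10, Hg20. reflexivity. }
  assert (EH : Derive (fun t => dx (Jac f1 f2) (g1 t) (g2 t) * k1 t + dy (Jac f1 f2) (g1 t) (g2 t) * k2 t) 0
     = (dx (dx (Jac f1 f2)) 0 0 * Derive g1 0 + dy (dx (Jac f1 f2)) 0 0 * Derive g2 0) * k1 0
       + dx (Jac f1 f2) 0 0 * Derive k1 0
       + ((dx (dy (Jac f1 f2)) 0 0 * Derive g1 0 + dy (dy (Jac f1 f2)) 0 0 * Derive g2 0) * k2 0
       + dy (Jac f1 f2) 0 0 * Derive k2 0)).
  { apply is_derive_unique. eapply isd_eq.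
    + apply isd_plus; apply isd_mult;
          [apply chain; auto; apply (so1_d _ e); auto | apply (so1_d _ e); auto
          |apply chain; auto; apply (so1_d _ e); auto | apply (so1_d _ e); auto].
    + cbv beta. rewrite Hg10, Hg20. reflexivity. }
  rewrite EH in Hh. clear EH.
  assert (RJ2 : Ck 2 (Jac f1 f2)) by (apply Ck_S; auto).
  assert (RF1 : Ck 2 f1) by (apply (Ck_le 4); auto).
  assert (RF2 : Ck 2 f2) by (apply (Ck_le 4); auto).
  assert (Heps0 : Rabs 0 < eps) by (rewrite Rabs_R0; auto).
  assert (PH1 : forall s, Rabs s < eps ->
     dx (Jac f1 f2) s (phi s) * 1 + dy (Jac f1 f2) s (phi s) * Derive phi s = 0).
  { intros s Hs. transitivity (Derive (fun r => Jac f1 f2 r (phi r)) s).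
    - symmetry. apply is_derive_unique. eapply isd_eq.
      + apply (chain (Jac f1 f2) (fun r => r) phi); [auto | apply isd_id | apply (so1_d _ eps); auto].
      + reflexivity.
    - apply is_derive_unique. apply (isd_zero_loc _ s eps); auto. }
  assert (Hphi1 : Derive phi 0 = 0).
  { pose proof (PH1 0 Heps0) as P. rewrite Hphi0, HJx0 in P.
    apply (Rmult_eq_reg_l (dy (Jac f1 f2) 0 0)); auto. lra. }
  assert (EPH : (dx (dx (Jac f1 f2)) 0 0 * 1 + dy (dx (Jac f1 f2)) 0 0 * Derive phi 0) * 1
      + dx (Jac f1 f2) 0 0 * 0
      + ((dx (dy (Jac f1 f2)) 0 0 * 1 + dy (dy (Jac f1 f2)) 0 0 * Derive phi 0) * Derive phi 0
      + dy (Jac f1 f2) 0 0 * Derive (Derive phi) 0) = 0).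
  { transitivity (Derive (fun s => dx (Jac f1 f2) s (phi s) * 1 + dy (Jac f1 f2) s (phi s) * Derive phi s) 0).
    - symmetry. apply is_derive_unique. eapply isd_eq.
      + apply isd_plus; apply isd_mult;
          [apply (chain _ (fun r => r) phi); [auto | apply isd_id | apply (so1_d _ eps); auto]
          | apply isd_const
          | apply (chain _ (fun r => r) phi); [auto | apply isd_id | apply (so1_d _ eps); auto]
          | apply (so1_dd _ eps); auto].
      + cbv beta. rewrite Hphi0. reflexivity.
    - apply is_derive_unique. apply (isd_zero_loc _ 0 eps); auto. }
  assert (V1 : Derive_n (fun t => f1 t (phi t)) 2 0 =
      (dx (dx f1) 0 0 * 1 + dy (dx f1) 0 0 * Derive phi 0) * 1 + dx f1 0 0 * 0
      + ((dx (dy f1) 0 0 * 1 + dy (dy f1) 0 0 * Derive phi 0) * Derive phi 0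
      + dy f1 0 0 * Derive (Derive phi) 0)).
  { change (Derive (Derive (fun t => f1 t (phi t))) 0 =
      (dx (dx f1) 0 0 * 1 + dy (dx f1) 0 0 * Derive phi 0) * 1 + dx f1 0 0 * 0
      + ((dx (dy f1) 0 0 * 1 + dy (dy f1) 0 0 * Derive phi 0) * Derive phi 0
      + dy f1 0 0 * Derive (Derive phi) 0)).
    assert (Hloc : locally 0 (fun s => Derive (fun t => f1 t (phi t)) s =
                     dx f1 s (phi s) * 1 + dy f1 s (phi s) * Derive phi s)).
    { eapply filter_imp; [|apply (loc_abs 0 eps Heps0)]. intros s Hs.
      apply is_derive_unique. eapply isd_eq.
      + apply (chain f1 (fun r => r) phi); [auto | apply isd_id | apply (so1_d _ eps); auto].
      + reflexivity. }
    rewrite (Derive_ext_loc _ _ 0 Hloc).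
    apply is_derive_unique. eapply isd_eq.
    + apply isd_plus; apply isd_mult;
          [apply (chain _ (fun r => r) phi); [auto | apply isd_id | apply (so1_d _ eps); auto]
          | apply isd_const
          | apply (chain _ (fun r => r) phi); [auto | apply isd_id | apply (so1_d _ eps); auto]
          | apply (so1_dd _ eps); auto].
    + cbv beta. rewrite Hphi0. reflexivity. }
  assert (V2 : Derive_n (fun t => f2 t (phi t)) 2 0 =
      (dx (dx f2) 0 0 * 1 + dy (dx f2) 0 0 * Derive phi 0) * 1 + dx f2 0 0 * 0
      + ((dx (dy f2) 0 0 * 1 + dy (dy f2) 0 0 * Derive phi 0) * Derive phi 0
      + dy f2 0 0 * Derive (Derive phi) 0)).
  { change (Derive (Derive (fun t => f2 t (phi t))) 0 =
      (dx (dx f2) 0 0 * 1 + dy (dx f2) 0 0 * Derive phi 0) * 1 + dx f2 0 0 * 0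
      + ((dx (dy f2) 0 0 * 1 + dy (dy f2) 0 0 * Derive phi 0) * Derive phi 0
      + dy f2 0 0 * Derive (Derive phi) 0)).
    assert (Hloc : locally 0 (fun s => Derive (fun t => f2 t (phi t)) s =
                     dx f2 s (phi s) * 1 + dy f2 s (phi s) * Derive phi s)).
    { eapply filter_imp; [|apply (loc_abs 0 eps Heps0)]. intros s Hs.
      apply is_derive_unique. eapply isd_eq.
      + apply (chain f2 (fun r => r) phi); [auto | apply isd_id | apply (so1_d _ eps); auto].
      + reflexivity. }
    rewrite (Derive_ext_loc _ _ 0 Hloc).
    apply is_derive_unique. eapply isd_eq.
    + apply isd_plus; apply isd_mult;
          [apply (chain _ (fun r => r) phi); [auto | apply isd_id | apply (so1_d _ eps); auto]
          | apply isd_const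
          | apply (chain _ (fun r => r) phi); [auto | apply isd_id | apply (so1_d _ eps); auto]
          | apply (so1_dd _ eps); auto].
    + cbv beta. rewrite Hphi0. reflexivity. }
  rewrite HJx0, HA0, HC0, HD0 in EJx.
  rewrite HA0, HC0, HD0 in EJy.
  rewrite HA0, HJx0 in EF1x. rewrite HC0, HD0, HJx0 in EF2x. rewrite HC0, HD0, HJx0 in EF2y.
  rewrite Hg2d, Hk20, HA0 in EQ. rewrite Hg2d, Hk20, HJx0 in Hh.
  rewrite Hphi1, HJx0 in EPH. rewrite Hphi1, HA0 in V1. rewrite Hphi1, HC0, HD0 in V2.
  unfold detDF, Dfapp. cbn [fst snd].
  apply (alg (dy f1 0 0) (dy (Jac f1 f2) 0 0) (dx (dx f1) 0 0) (dx (dx f2) 0 0) (dy (dx f2) 0 0)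
    (dx (dx (Jac f1 f2)) 0 0) (Derive (Derive phi) 0) (Derive g1 0) (k1 0) (Derive k2 0)
    (dx (Fmap1 f1 f2) 0 0) (dx (Fmap2 f1 f2) 0 0) (dy (Fmap2 f1 f2) 0 0) (dy (Fmap1 f1 f2) 0 0));
    auto.
  - apply (Rmult_eq_reg_l (dy f1 0 0)); auto. lra.
  - lra.
  - rewrite EF1x. ring.
  - rewrite EF2x. ring.
  - rewrite EF2y. ring.
  - lra.
  - intro E; apply Hh; lra.
  - lra.
  - rewrite V1; ring.
  - rewrite V2; ring.
  - rewrite HA0, HJx0; ring.
  - rewrite HC0, HD0; ring.
Qed.
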